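(* Let $n\ge2$, $\mu>0$, $p=[n/2]$, and let $\varphi:\Delta^{p}\to\Omega_2[n]$ send $u=(u_1,\dots,u_p)$ to the skew-symmetric $n\times n$ matrix whose $(j,n+1-j)$ entry is $u_j$ and whose $(n+1-j,j)$ entry is $-u_j$ for $j=1,\dots,p$, all other entries being $0$. Then $f:M_{\Delta^{p}}(\mu)\to M_{\Omega_2[n]}(\mu)$, $f(u,w)=(\varphi(u),w)$, is a totally geodesic Kähler immersion.
   Context: $\Omega_2[n]=\{Z\in M_n(\mathbb C): Z=-Z^T,\ I_n-ZZ^*>0\}$, viewed as a domain in $\mathbb C^{n(n-1)/2}$ via the coordinates $u_{jk}$, $j<k$ (the entries above the diagonal), with generic norm $N(Z,Z)=\det^{1/2}(I_n-ZZ^* )$. $\Delta^p$ is the unit polydisk with $N_{\Delta^p}(u,u)=\prod_j(1-|u_j|^2)$. For a domain $\Omega$ with generic norm $N_\Omega$ and $\mu>0$: $M_\Omega(\mu)=\{(z,w)\in\Omega\times\mathbb C:|w|^2<N_\Omega^\mu(z,z)\}$ with Kähler metric $\omega(\mu)=\frac i2\partial\bar\partial(-\log(N_\Omega^\mu(z,z)-|w|^2))$. A Kähler immersion is a holomorphic map pulling back the target metric to the source metric. *)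

(* Defs.v *)
From HB Require Import structures.
From mathcomp Require Import all_boot all_order all_algebra.
From mathcomp Require Import all_classical all_reals all_analysis.
From mathcomp.real_closed Require Import complex.
Set Implicit Arguments. Unset Strict Implicit. Unset Printing Implicit Defensive.
Import Order.TTheory GRing.Theory Num.Theory.
Import numFieldNormedType.Exports.
Local Open Scope ring_scope.

Section Kahler.
Variable R : realType.
Local Notation C := (complex R).

(* A point of C^N, as (real parts, imaginary parts). *)
Definition pt (N : nat) := ('rV[R]_N * 'rV[R]_N)%type.

Definition coord N (z : pt N) (k : 'I_N) : C := Complex (z.1 0 k) (z.2 0 k).

Definition sqn (c : C) : R := complex.Re c ^+ 2 + complex.Im c ^+ 2.

Definition ex N (k : 'I_N) : pt N := (delta_mx 0 k, 0).
Definition ey N (k : 'I_N) : pt N := (0, delta_mx 0 k).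

Definition dx N (F : pt N -> R) (k : 'I_N) (z : pt N) : R := 'D_(ex k) F z.
Definition dy N (F : pt N -> R) (k : 'I_N) (z : pt N) : R := 'D_(ey k) F z.

Definition dxC N (G : pt N -> C) k z : C :=
  Complex (dx (fun w => complex.Re (G w)) k z) (dx (fun w => complex.Im (G w)) k z).
Definition dyC N (G : pt N -> C) k z : C :=
  Complex (dy (fun w => complex.Re (G w)) k z) (dy (fun w => complex.Im (G w)) k z).

Definition dz N (G : pt N -> C) (k : 'I_N) (z : pt N) : C :=
  (dxC G k z - Complex 0 1 * dyC G k z) / 2%:R.
Definition dzb N (G : pt N -> C) (k : 'I_N) (z : pt N) : C :=
  (dxC G k z + Complex 0 1 * dyC G k z) / 2%:R.

(* Kaehler metric of the form omega = (i/2) d dbar Phi: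
   g_{a bbar}(z) = d^2 Phi / dz_a dzbar_b (z) *)
Definition gmet N (Phi : pt N -> R) (a b : 'I_N) (z : pt N) : C :=
  dz (fun w => dzb (fun v => Complex (Phi v) 0) b w) a z.

Definition gmx N (Phi : pt N -> R) (z : pt N) : 'M[C]_N :=
  \matrix_(a, b) gmet Phi a b z.

(* Christoffel symbols of the Levi-Civita (= Chern) connection of a Kaehler
   metric:  Gamma^k_{ab} = sum_l g^{k lbar} d_a g_{b lbar} *)
Definition christoffel N (Phi : pt N -> R) (k a b : 'I_N) (z : pt N) : C :=
  \sum_(l < N) dz (fun w => gmet Phi b l w) a z * (invmx (gmx Phi z)) l k.

Definition fcomp m N (f : pt m -> pt N) (k : 'I_N) : pt m -> C :=
  fun w => coord (f w) k.

Definition holomorphic_on m N (D : set (pt m)) (f : pt m -> pt N) :=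
  forall z, D z -> differentiable f z /\
    forall (k : 'I_N) (b : 'I_m), dzb (fcomp f k) b z = 0.

(* Kaehler immersion: holomorphic map D1 -> D2 with f^* omega_2 = omega_1 *)
Definition kahler_immersion m N (D1 : set (pt m)) (Phi1 : pt m -> R)
    (D2 : set (pt N)) (Phi2 : pt N -> R) (f : pt m -> pt N) :=
  [/\ forall z, D1 z -> D2 (f z),
      holomorphic_on D1 f &
      forall z, D1 z -> forall a b : 'I_m,
        gmet Phi1 a b z =
        \sum_(i < N) \sum_(j < N)
           gmet Phi2 i j (f z) * dz (fcomp f i) a z * (dz (fcomp f j) b z)^* ].

(* Totally geodesic (for a holomorphic map into a Kaehler domain): the second
   fundamental form vanishes, i.e. the ambient covariant derivative
   nabla_{f_* d_a} f_* d_b = (d_a d_b f^k + Gamma^k_{ij}(f) d_a f^i d_b f^j) d_k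
   is tangent to the image (lies in the span of the d_c f). *)
Definition totally_geodesic m N (D1 : set (pt m)) (Phi2 : pt N -> R)
    (f : pt m -> pt N) :=
  forall z, D1 z -> forall a b : 'I_m, exists c : 'I_m -> C,
    forall k : 'I_N,
      dz (fun w => dz (fcomp f k) b w) a z
      + \sum_(i < N) \sum_(j < N)
          christoffel Phi2 k i j (f z) * dz (fcomp f i) a z * dz (fcomp f j) b z
      = \sum_(g < m) c g * dz (fcomp f k) g z.

Definition zpart N (z : pt (N + 1)) : pt N := (lsubmx z.1, lsubmx z.2).
Definition wpart N (z : pt (N + 1)) : C := coord z (rshift N ord0).

Definition Mdom N (Omega : set (pt N)) (NO : pt N -> R) (mu : R)
  : set (pt (N + 1)) :=
  [set z | Omega (zpart z) /\ sqn (wpart z) < NO (zpart z) `^ mu].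

Definition Mpot N (NO : pt N -> R) (mu : R) (z : pt (N + 1)) : R :=
  - ln (NO (zpart z) `^ mu - sqn (wpart z)).

Definition polydisk p : set (pt p) := [set u | forall j, sqn (coord u j) < 1].
Definition polydisk_norm p (u : pt p) : R := \prod_(j < p) (1 - sqn (coord u j)).

Definition skew_idx (n : nat) := {q : 'I_n * 'I_n | (q.1 < q.2)%N}.
Definition skew_dim (n : nat) := #|{: skew_idx n}|.

Definition ucoef n (z : pt (skew_dim n)) (j k : 'I_n) : C :=
  if (insub (j, k) : option (skew_idx n)) is Some q then coord z (enum_rank q)
  else 0.

Definition Zmat n (z : pt (skew_dim n)) : 'M[C]_n :=
  \matrix_(j, k) (ucoef z j k - ucoef z k j).

Definition adjmx n (A : 'M[C]_n) : 'M[C]_n := (map_mx Num.conj A)^T.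

Definition posdef n (A : 'M[C]_n) :=
  forall v : 'rV[C]_n, v != 0 -> 0 < (v *m A *m (map_mx Num.conj v)^T) 0 0.

Definition Omega2 n : set (pt (skew_dim n)) :=
  [set z | posdef (1%:M - Zmat z *m adjmx (Zmat z))].

Definition Omega2_norm n (z : pt (skew_dim n)) : R :=
  Num.sqrt (complex.Re (\det (1%:M - Zmat z *m adjmx (Zmat z)))).

(* phi(u): the coordinate u_{j, n-1-j} (0-based) equals u_j for j < n/2,
   all other coordinates vanish *)
Definition phiv n (x : 'rV[R]_(n./2)) : 'rV[R]_(skew_dim n) :=
  \row_i let q : skew_idx n := enum_val (i : 'I_#|{: skew_idx n}|) in
    \sum_(j < n./2)
     (if (nat_of_ord (val q).1 == nat_of_ord j) &&
         (nat_of_ord (val q).2 == (n.-1 - j)%N) then x 0 j else 0).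

Definition phi_ext n (z : pt (n./2 + 1)) : pt (skew_dim n + 1) :=
  (row_mx (phiv (lsubmx z.1)) (rsubmx z.1),
   row_mx (phiv (lsubmx z.2)) (rsubmx z.2)).

End Kahler.

(* Main.v *)
Require Import Defs.
From HB Require Import structures.
From mathcomp Require Import all_boot all_order all_algebra.
From mathcomp Require Import all_classical all_reals all_analysis.
From mathcomp.real_closed Require Import complex.
From mathcomp Require Import zify ring lra.
Import Order.TTheory GRing.Theory Num.Theory.
Import numFieldNormedType.Exports.
Local Open Scope ring_scope.
Local Open Scope classical_set_scope.
Set Implicit Arguments. Unset Strict Implicit. Unset Printing Implicit Defensive.

Section S.
Variable R : realType.
Local Notation C := (complex R).

Lemma dnbhs0N : (-%R @ (0:R)^') = (0:R)^'.
Proof.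
rewrite predeqE => A.
change ((\forall y \near (0:R), y != 0 -> A (- y)) <-> (\forall y \near (0:R), y != 0 -> A y)).
have := @nearN R 0 (fun y => y != 0 -> A y).
rewrite oppr0 => ->.
split; apply: filterS => x /= H; rewrite ?oppr_eq0 // => xn.
by apply: H; rewrite oppr_eq0.
Qed.

Lemma D_opp (V : normedModType R) (F : V -> R) (a v : V) :
  'D_(- v) F a = - 'D_v F a.
Proof.
rewrite /derive.
set g := fun h : R => h^-1 *: ((F \o shift a) (h *: v) - F a).
have -> : (fun h : R => h^-1 *: ((F \o shift a) (h *: - v) - F a)) =
   (fun h => - g (- h)).
  apply/funext => h; rewrite /g /= invrN scaleNr opprK scalerN scaleNr //.
have E : ((fun h => - g (- h)) @ (0:R)^') = (-%R @ (g @ (-%R @ (0:R)^'))) by [].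
rewrite E dnbhs0N.
have [cg|ncg] := pselect (cvg (g @ (0:R)^')).
  exact: (limN cg).
have ncg' : ~ cvg (-%R @ (g @ (0:R)^')).
  move=> cng; apply: ncg.
  have -> : g = (fun h => - (- g h)) by apply/funext => h; rewrite opprK.
  exact: (@is_cvgN _ _ _ _ _ (fun h => - g h) cng).
rewrite (dvgP ncg) (dvgP ncg').
by rewrite oppr0.
Qed.

Lemma D_negf (V : normedModType R) (F : V -> R) (a v : V) :
  'D_v (fun x => - F x) a = - 'D_v F a.
Proof.
rewrite /derive.
set g := fun h : R => h^-1 *: ((F \o shift a) (h *: v) - F a).
have -> : (fun h : R => h^-1 *: (((fun x => - F x) \o shift a) (h *: v) - - F a)) =
   (fun h => - g h).
  by apply/funext => h; rewrite /g /= -scalerN opprD.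
have E : ((fun h => - g h) @ (0:R)^') = (-%R @ (g @ (0:R)^')) by [].
rewrite E.
have [cg|ncg] := pselect (cvg (g @ (0:R)^')).
  exact: (limN cg).
have ncg' : ~ cvg (-%R @ (g @ (0:R)^')).
  move=> cng; apply: ncg.
  have -> : g = (fun h => - (- g h)) by apply/funext => h; rewrite opprK.
  exact: (@is_cvgN _ _ _ _ _ (fun h => - g h) cng).
rewrite (dvgP ncg) (dvgP ncg').
by rewrite oppr0.
Qed.

Lemma D_lin (V1 V2 : normedModType R) (L : V1 -> V2) (F : V2 -> R) (a v : V1) :
  (forall (h : R) x, L (h *: v + x) = h *: L v + L x) ->
  'D_v (F \o L) a = 'D_(L v) F (L a).
Proof.
move=> HL; rewrite /derive.
suff -> : (fun h : R => h^-1 *: ((F \o L \o shift a) (h *: v) - (F \o L) a)) =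
  (fun h : R => h^-1 *: ((F \o shift (L a)) (h *: L v) - F (L a))) by [].
by apply/funext => h /=; rewrite HL.
Qed.

Definition sg {T : zmodType} (b : bool) (x : T) := if b then - x else x.

Lemma sgK {T : zmodType} b (x : T) : sg b (sg b x) = x.
Proof. by case: b; rewrite /sg ?opprK. Qed.

Lemma sg_add {T : zmodType} b c (x : T) : sg b (sg c x) = sg (b (+) c) x.
Proof. by case: b; case: c; rewrite /sg /= ?opprK. Qed.

Lemma D_sg (V : normedModType R) (F : V -> R) (a v : V) b :
  'D_(sg b v) F a = sg b ('D_v F a).
Proof. by case: b => //=; rewrite /sg D_opp. Qed.

Lemma D_sgf (V : normedModType R) (F : V -> R) (a v : V) b :
  'D_v (fun x => sg b (F x)) a = sg b ('D_v F a).
Proof. by case: b => //=; rewrite /sg D_negf. Qed.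

Definition Smap N (s : 'I_N -> bool) (z : pt R N) : pt R N :=
  (\row_k sg (s k) (z.1 0 k), \row_k sg (s k) (z.2 0 k)).

Lemma sg_lin {T : lmodType R} b (h : R) (x y : T) :
   sg b (h *: x + y) = h *: sg b x + sg b y.
Proof. by case: b; rewrite /sg // opprD scalerN. Qed.

Lemma Smap_lin N s (h : R) (v x : pt R N) :
  Smap s (h *: v + x) = h *: Smap s v + Smap s x.
Proof.
rewrite /Smap; congr pair; apply/rowP => k; rewrite !mxE; exact: sg_lin.
Qed.

Lemma ptN N (a b : 'rV[R]_N) : - ((a, b) : pt R N) = (- a, - b).
Proof. by []. Qed.

Lemma Smap_ex N s (k : 'I_N) : Smap s (ex R k) = sg (s k) (ex R k).
Proof.
rewrite /Smap /ex /=.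
case E: (s k); rewrite /sg ?ptN; congr pair;
  apply/rowP => j; rewrite !mxE /=; case: (eqVneq j k) => [->|jk];
  rewrite ?E ?oppr0 ?eqxx //= ?(negbTE jk) ?oppr0; case: (s j); rewrite ?oppr0 //.
Qed.

Lemma Smap_ey N s (k : 'I_N) : Smap s (ey R k) = sg (s k) (ey R k).
Proof.
rewrite /Smap /ey /=.
case E: (s k); rewrite /sg ?ptN; congr pair;
  apply/rowP => j; rewrite !mxE /=; case: (eqVneq j k) => [->|jk];
  rewrite ?E ?oppr0 ?eqxx //= ?(negbTE jk) ?oppr0; case: (s j); rewrite ?oppr0 //.
Qed.


Definition parR N (S : pt R N -> pt R N) (e : bool) (F : pt R N -> R) :=
  forall z, F (S z) = sg e (F z).
Definition parC N (S : pt R N -> pt R N) (e : bool) (G : pt R N -> C) :=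
  forall z, G (S z) = sg e (G z).

Lemma dx_Smap N s (F : pt R N -> R) k z :
  dx (F \o Smap s) k z = sg (s k) (dx F k (Smap s z)).
Proof.
rewrite /dx (@D_lin _ _ (Smap s) F z (ex R k) (fun h x => Smap_lin s h (ex R k) x)).
by rewrite Smap_ex D_sg.
Qed.

Lemma dy_Smap N s (F : pt R N -> R) k z :
  dy (F \o Smap s) k z = sg (s k) (dy F k (Smap s z)).
Proof.
rewrite /dy (@D_lin _ _ (Smap s) F z (ey R k) (fun h x => Smap_lin s h (ey R k) x)).
by rewrite Smap_ey D_sg.
Qed.

Lemma par_dx N s e (F : pt R N -> R) k :
  parR (Smap s) e F -> parR (Smap s) (e (+) s k) (dx F k).
Proof.
move=> H z.
have H1 : dx (F \o Smap s) k z = sg e (dx F k z).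
  have -> : F \o Smap s = (fun w => sg e (F w)) by apply/funext => w; exact: H.
  by rewrite /dx D_sgf.
move: H1; rewrite dx_Smap => /(congr1 (sg (s k))); rewrite sgK sg_add => ->.
by rewrite addbC.
Qed.

Lemma par_dy N s e (F : pt R N -> R) k :
  parR (Smap s) e F -> parR (Smap s) (e (+) s k) (dy F k).
Proof.
move=> H z.
have H1 : dy (F \o Smap s) k z = sg e (dy F k z).
  have -> : F \o Smap s = (fun w => sg e (F w)) by apply/funext => w; exact: H.
  by rewrite /dy D_sgf.
move: H1; rewrite dy_Smap => /(congr1 (sg (s k))); rewrite sgK sg_add => ->.
by rewrite addbC.
Qed.

Lemma Re_sg e (x : C) : complex.Re (sg e x) = sg e (complex.Re x).
Proof. by case: e; case: x. Qed.
Lemma Im_sg e (x : C) : complex.Im (sg e x) = sg e (complex.Im x).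
Proof. by case: e; case: x. Qed.
Lemma Complex_sg e (a b : R) : Complex (sg e a) (sg e b) = sg e (Complex a b).
Proof. by case: e. Qed.

Lemma sgD {T : zmodType} e (x y : T) : sg e x + sg e y = sg e (x + y).
Proof. by case: e; rewrite /sg // opprD. Qed.
Lemma sgN {T : zmodType} e (x : T) : - sg e x = sg e (- x).
Proof. by case: e. Qed.
Lemma sgMl {T : pzRingType} e (c x : T) : c * sg e x = sg e (c * x).
Proof. by case: e; rewrite /sg // mulrN. Qed.
Lemma sgMr {T : pzRingType} e (c x : T) : sg e x * c = sg e (x * c).
Proof. by case: e; rewrite /sg // mulNr. Qed.

Lemma par_dxC N s e (G : pt R N -> C) k :
  parC (Smap s) e G -> parC (Smap s) (e (+) s k) (dxC G k).
Proof.
move=> H z; rewrite /dxC.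
have HR : parR (Smap s) e (fun w => complex.Re (G w)) by move=> w; rewrite H Re_sg.
have HI : parR (Smap s) e (fun w => complex.Im (G w)) by move=> w; rewrite H Im_sg.
by rewrite (par_dx k HR) (par_dx k HI) Complex_sg.
Qed.

Lemma par_dyC N s e (G : pt R N -> C) k :
  parC (Smap s) e G -> parC (Smap s) (e (+) s k) (dyC G k).
Proof.
move=> H z; rewrite /dyC.
have HR : parR (Smap s) e (fun w => complex.Re (G w)) by move=> w; rewrite H Re_sg.
have HI : parR (Smap s) e (fun w => complex.Im (G w)) by move=> w; rewrite H Im_sg.
by rewrite (par_dy k HR) (par_dy k HI) Complex_sg.
Qed.

Lemma par_dz N s e (G : pt R N -> C) k :
  parC (Smap s) e G -> parC (Smap s) (e (+) s k) (dz G k).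
Proof.
move=> H z; rewrite /dz (par_dxC k H) (par_dyC k H).
by rewrite sgMl sgN sgD sgMr.
Qed.

Lemma par_dzb N s e (G : pt R N -> C) k :
  parC (Smap s) e G -> parC (Smap s) (e (+) s k) (dzb G k).
Proof.
move=> H z; rewrite /dzb (par_dxC k H) (par_dyC k H).
by rewrite sgMl sgD sgMr.
Qed.

Lemma par_gmet N s (Phi : pt R N -> R) a b :
  parR (Smap s) false Phi -> parC (Smap s) (s a (+) s b) (gmet Phi a b).
Proof.
move=> H.
have H0 : parC (Smap s) false (fun v => Complex (Phi v) 0) by move=> z; rewrite H.
have H1 := par_dzb b H0.
have H2 := par_dz a H1.
move=> z; rewrite /gmet H2; congr sg.
by rewrite /= addbC.
Qed.

Lemma sg_fix0 (x : C) : x = sg true x -> x = 0.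
Proof.
rewrite /sg => /eqP; rewrite -subr_eq0 opprK -mulr2n mulrn_eq0 /= => /eqP //.
Qed.


Lemma inv_par N (s : 'I_N -> bool) (M : 'M[C]_N) :
  (forall a b, M a b = sg (s a (+) s b) (M a b)) ->
  forall a b, invmx M a b = sg (s a (+) s b) (invmx M a b).
Proof.
move=> HM.
pose d := \row_i (if s i then -1 else 1 : C).
pose D := diag_mx d.
have sgE : forall a b (x : C), sg (s a (+) s b) x = d 0 a * x * d 0 b.
  by move=> a b x; rewrite !mxE; case: (s a); case: (s b);
     rewrite /sg /= ?mulN1r ?mulrN1 ?mul1r ?mulr1 ?opprK.
have DAD : forall A : 'M[C]_N, forall a b, (D *m A *m D) a b = d 0 a * A a b * d 0 b.
  by move=> A a b; rewrite mul_mx_diag mxE mul_diag_mx mxE.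
have DD : D *m D = 1%:M.
  apply/matrixP => i j; rewrite mul_diag_mx !mxE.
  case: (eqVneq i j) => [->|ij]; last by rewrite mulr0.
  by case: (s j); rewrite /= ?mulN1r ?opprK ?mulr1.
have MD : M = D *m M *m D.
  by apply/matrixP => a b; rewrite DAD -sgE -HM.
suff E : invmx M = D *m invmx M *m D by move=> a b; rewrite {1}E DAD -sgE.
case: (boolP (M \in unitmx)) => Mu; last first.
  by rewrite invmx_out // -MD.
set X := D *m invmx M *m D.
have MX : M *m X = 1%:M.
  rewrite {1}MD /X !mulmxA -(mulmxA (D *m M) D D) DD mulmx1.
  by rewrite -(mulmxA D M (invmx M)) mulmxV // mulmx1 DD.
have XM := mulmx1C MX.
by rewrite -[LHS]mul1mx -XM -mulmxA mulmxV // mulmx1.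
Qed.

Lemma christ0 N s (Phi : pt R N -> R) z k a b :
  parR (Smap s) false Phi -> Smap s z = z ->
  s a = false -> s b = false -> s k = true -> christoffel Phi k a b z = 0.
Proof.
move=> HP Hz sa sb sk; rewrite /christoffel big1 // => l _.
case sl: (s l).
  have H := par_dz a (par_gmet b l HP).
  have := H z; rewrite Hz sa sb sl /= => /sg_fix0 ->.
  by rewrite mul0r.
have HM : forall a b, gmx Phi z a b = sg (s a (+) s b) (gmx Phi z a b).
  by move=> a' b'; rewrite !mxE -{1}Hz par_gmet.
have := inv_par HM l k; rewrite sl sk /= => /sg_fix0 ->.
by rewrite mulr0.
Qed.



Lemma D_linf (V : normedModType R) (P : V -> R) (a v : V) :
  (forall (h : R) x, P (h *: v + x) = h * P v + P x) -> 'D_v P a = P v.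
Proof.
move=> HP; rewrite /derive. apply: (@lim_near_cst R^o) => //.
near=> h; rewrite /= HP addrK.
have h0 : h != 0 by near: h; exact: nbhs_dnbhs_neq.
by rewrite /GRing.scale /= mulrA mulVf // mul1r.
Unshelve. all: by end_near.
Qed.

Lemma dx_p1 N (k b : 'I_N) (a : pt R N) : dx (fun y => y.1 0 k) b a = (k == b)%:R.
Proof.
rewrite /dx D_linf /ex /=; first by rewrite mxE eqxx.
by move=> h x; rewrite !mxE.
Qed.
Lemma dx_p2 N (k b : 'I_N) (a : pt R N) : dx (fun y => y.2 0 k) b a = 0.
Proof.
rewrite /dx D_linf /ex /=; first by rewrite mxE.
by move=> h x; rewrite !mxE.
Qed.
Lemma dy_p1 N (k b : 'I_N) (a : pt R N) : dy (fun y => y.1 0 k) b a = 0.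
Proof.
rewrite /dy D_linf /ey /=; first by rewrite mxE.
by move=> h x; rewrite !mxE.
Qed.
Lemma dy_p2 N (k b : 'I_N) (a : pt R N) : dy (fun y => y.2 0 k) b a = (k == b)%:R.
Proof.
rewrite /dy D_linf /ey /=; first by rewrite mxE eqxx.
by move=> h x; rewrite !mxE.
Qed.

Lemma dz_cst N (c : C) (a : 'I_N) z : dz (fun _ => c) a z = 0.
Proof.
rewrite /dz /dxC /dyC /dx /dy.
have E : forall (r : R) v, 'D_v (fun _ : pt R N => r) z = 0.
  by move=> r v; exact: derive_cst.
by rewrite !E mulr0 subr0 mul0r.
Qed.

Lemma cplx_1 : (Complex 1 0 - Complex 0 1 * Complex 0 1) / 2%:R = 1 :> C.
Proof.
have -> : Complex 1 0 - Complex 0 1 * Complex 0 1 = 2%:R :> C.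
  by apply/eqP; rewrite eq_complex /= !mul0r !mulr1 !mul1r; apply/andP; split;
    apply/eqP; rewrite /= ?oppr0 ?subr0 ?addr0 ?opprK //; ring.
by rewrite mulfV // pnatr_eq0.
Qed.

Lemma cplx_0 : (Complex 0 0 - Complex 0 1 * Complex 0 0) / 2%:R = 0 :> C.
Proof. by rewrite !mulr0 subr0 mul0r. Qed.

Lemma cplx_1b : (Complex 1 0 + Complex 0 1 * Complex 0 1) / 2%:R = 0 :> C.
Proof.
have -> : Complex 1 0 + Complex 0 1 * Complex 0 1 = 0 :> C.
  by apply/eqP; rewrite eq_complex /= !mul0r !mulr1 !mul1r; apply/andP; split;
    apply/eqP; rewrite /= ?oppr0 ?subr0 ?addr0 ?opprK //; ring.
by rewrite mul0r.
Qed.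

Lemma cplx_0b : (Complex 0 0 + Complex 0 1 * Complex 0 0) / 2%:R = 0 :> C.
Proof. by rewrite !mulr0 addr0 mul0r. Qed.

Section F.
Variable n : nat.
Local Notation p := (n./2).
Local Notation K := (skew_dim n).

Lemma half_le2 : (p + p <= n)%N.
Proof. by rewrite addnn -{2}(odd_double_half n) leq_addl. Qed.

Lemma half_le : (p <= n)%N.
Proof. by apply: leq_trans (leq_addr p p) half_le2. Qed.

Lemma qidx_lt (j : 'I_p) :
  ((widen_ord half_le j) < (rev_ord (widen_ord half_le j)))%N.
Proof. have := half_le2; have := ltn_ord j; rewrite /=; lia. Qed.

Definition qidx (j : 'I_p) : skew_idx n :=
  exist _ (widen_ord half_le j, rev_ord (widen_ord half_le j)) (qidx_lt j).

Definition sigma (a : 'I_(p + 1)) : 'I_(K + 1) :=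
  match fintype.split a with
  | inl j => lshift 1 (enum_rank (qidx j))
  | inr _ => rshift K ord0
  end.

Lemma sigma_l (j : 'I_p) : sigma (lshift 1 j) = lshift 1 (enum_rank (qidx j)).
Proof.
by rewrite /sigma; case: split_ordP => [j' /lshift_inj ->|k /eqP]; rewrite ?eq_shift.
Qed.

Lemma sigma_r (k : 'I_1) : sigma (rshift p k) = rshift K ord0.
Proof.
by rewrite /sigma; case: split_ordP => [j' /eqP|k' _]; rewrite ?eq_shift.
Qed.

Lemma sigma_inj : injective sigma.
Proof.
move=> a b; rewrite -(splitK a) -(splitK b).
case: (fintype.split a) => [ja|ka]; case: (fintype.split b) => [jb|kb] /=;
  rewrite ?sigma_l ?sigma_r.
- move=> /lshift_inj /enum_rank_inj /(congr1 val) [] E _.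
  by congr lshift; apply: val_inj; exact: E.
- by move=> /eqP; rewrite eq_shift.
- by move=> /eqP; rewrite eq_shift.
- by rewrite (ord1 ka) (ord1 kb).
Qed.

Lemma qidx_eq (q : skew_idx n) (j : 'I_p) :
  (q == qidx j) = ((nat_of_ord (val q).1 == nat_of_ord j) &&
                   (nat_of_ord (val q).2 == (n.-1 - j)%N)).
Proof.
rewrite -(inj_eq val_inj) /= -pair_eqE /=.
congr andb; rewrite -val_eqE /=; apply/eqP/eqP; lia.
Qed.

Lemma phi_entry (x : 'rV[R]_(p + 1)) (i : 'I_(K + 1)) :
  (row_mx (phiv (lsubmx x)) (rsubmx x)) 0 i = \sum_a (i == sigma a)%:R * x 0 a.
Proof.
rewrite big_split_ord /= big_ord1 sigma_r.
rewrite -(splitK i); case: (fintype.split i) => [r|k] /=.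
- rewrite row_mxEl eq_lrshift mul0r addr0 mxE.
  apply: eq_bigr => j _; rewrite sigma_l (inj_eq (@lshift_inj _ _)).
  have -> : (r == enum_rank (qidx j)) = (enum_val r == qidx j).
    by rewrite -(inj_eq enum_rank_inj) enum_valK.
  rewrite qidx_eq mxE.
  by case: ifP; rewrite ?mul1r ?mul0r.
- rewrite row_mxEr eq_shift (ord1 k) eqxx mul1r big1 ?add0r ?mxE //.
  by move=> j _; rewrite sigma_l eq_rlshift mul0r.
Qed.


Lemma phi1 (z : pt R (p + 1)) i :
  (phi_ext z).1 0 i = \sum_a (i == sigma a)%:R * z.1 0 a.
Proof. exact: phi_entry. Qed.
Lemma phi2 (z : pt R (p + 1)) i :
  (phi_ext z).2 0 i = \sum_a (i == sigma a)%:R * z.2 0 a.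
Proof. exact: phi_entry. Qed.

Lemma phi_lin (h : R) (v x : pt R (p + 1)) :
  phi_ext (h *: v + x) = h *: phi_ext v + phi_ext x.
Proof.
apply: injective_projections; apply/rowP => i.
  transitivity (h * (phi_ext v).1 0 i + (phi_ext x).1 0 i); last by rewrite /= !mxE.
  rewrite !phi1 mulr_sumr -big_split /=; apply: eq_bigr => a _.
  by rewrite !mxE; ring.
transitivity (h * (phi_ext v).2 0 i + (phi_ext x).2 0 i); last by rewrite /= !mxE.
rewrite !phi2 mulr_sumr -big_split /=; apply: eq_bigr => a _.
by rewrite !mxE; ring.
Qed.

Lemma sum_delta (i : 'I_(K + 1)) (a : 'I_(p + 1)) :
  \sum_b (i == sigma b)%:R * (delta_mx 0 a : 'rV[R]_(p + 1)) 0 b =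
  (i == sigma a)%:R.
Proof.
rewrite (bigD1 a) //= big1 ?addr0; first by rewrite mxE !eqxx mulr1.
by move=> b ba; rewrite mxE (negbTE ba) mulr0.
Qed.

Lemma phi_ex a : phi_ext (ex R a) = ex R (sigma a).
Proof.
apply: injective_projections; apply/rowP => i; rewrite ?phi1 ?phi2 /=.
  by rewrite sum_delta mxE eqxx.
by rewrite big1 ?mxE // => b _; rewrite mxE mulr0.
Qed.

Lemma phi_ey a : phi_ext (ey R a) = ey R (sigma a).
Proof.
apply: injective_projections; apply/rowP => i; rewrite ?phi1 ?phi2 /=.
  by rewrite big1 ?mxE // => b _; rewrite mxE mulr0.
by rewrite sum_delta mxE eqxx.
Qed.

Lemma phi_fix s : (forall a, s (sigma a) = false) ->
  forall z, Smap s (phi_ext z) = phi_ext z.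
Proof.
move=> Hs z; apply: injective_projections; apply/rowP => i; rewrite mxE;
  case si : (s i) => //=; rewrite ?phi1 ?phi2 big1 ?oppr0 // => a _;
  (have -> : (i == sigma a) = false by apply/negbTE/eqP => E; move: si; rewrite E Hs);
  by rewrite mul0r.
Qed.

Lemma dx_phi1 k b (z : pt R (p + 1)) : dx (fun w => (@phi_ext R n w).1 0 k) b z = (k == sigma b)%:R.
Proof.
change (dx ((fun y : pt R (K + 1) => y.1 0 k) \o @phi_ext R n) b z = (k == sigma b)%:R).
rewrite /dx (@D_lin _ _ (@phi_ext R n) _ z (ex R b) (fun h x => phi_lin h (ex R b) x)).
by rewrite phi_ex; exact: dx_p1.
Qed.
Lemma dx_phi2 k b (z : pt R (p + 1)) : dx (fun w => (@phi_ext R n w).2 0 k) b z = 0.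
Proof.
change (dx ((fun y : pt R (K + 1) => y.2 0 k) \o @phi_ext R n) b z = 0).
rewrite /dx (@D_lin _ _ (@phi_ext R n) _ z (ex R b) (fun h x => phi_lin h (ex R b) x)).
by rewrite phi_ex; exact: dx_p2.
Qed.
Lemma dy_phi1 k b (z : pt R (p + 1)) : dy (fun w => (@phi_ext R n w).1 0 k) b z = 0.
Proof.
change (dy ((fun y : pt R (K + 1) => y.1 0 k) \o @phi_ext R n) b z = 0).
rewrite /dy (@D_lin _ _ (@phi_ext R n) _ z (ey R b) (fun h x => phi_lin h (ey R b) x)).
by rewrite phi_ey; exact: dy_p1.
Qed.
Lemma dy_phi2 k b (z : pt R (p + 1)) : dy (fun w => (@phi_ext R n w).2 0 k) b z = (k == sigma b)%:R.
Proof.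
change (dy ((fun y : pt R (K + 1) => y.2 0 k) \o @phi_ext R n) b z = (k == sigma b)%:R).
rewrite /dy (@D_lin _ _ (@phi_ext R n) _ z (ey R b) (fun h x => phi_lin h (ey R b) x)).
by rewrite phi_ey; exact: dy_p2.
Qed.

Lemma dz_f k a (z : pt R (p + 1)) : dz (fcomp (@phi_ext R n) k) a z = ((k == sigma a)%:R : C).
Proof.
rewrite /dz /dxC /dyC /fcomp /coord /=.
rewrite dx_phi1 dx_phi2 dy_phi1 dy_phi2.
by case: (k == sigma a); rewrite ?cplx_1 ?cplx_0.
Qed.

Lemma dzb_f k a (z : pt R (p + 1)) : dzb (fcomp (@phi_ext R n) k) a z = 0.
Proof.
rewrite /dzb /dxC /dyC /fcomp /coord /=.
rewrite dx_phi1 dx_phi2 dy_phi1 dy_phi2.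
by case: (k == sigma a); rewrite ?cplx_1b ?cplx_0b.
Qed.

Lemma ddz_f k a b (z : pt R (p + 1)) : dz (fun w => dz (fcomp (@phi_ext R n) k) b w) a z = 0.
Proof.
have -> : (fun w => dz (fcomp (@phi_ext R n) k) b w) = (fun _ => ((k == sigma b)%:R : C)).
  by apply/funext => w; rewrite dz_f.
exact: dz_cst.
Qed.
End F.


Definition dg m (e : 'I_m -> bool) : 'M[C]_m :=
  diag_mx (\row_i (if e i then -1 else 1)).

Lemma dgE m (e : 'I_m -> bool) (A : 'M[C]_m) a b :
  (dg e *m A *m dg e) a b = sg (e a (+) e b) (A a b).
Proof.
rewrite mul_mx_diag mxE mul_diag_mx !mxE.
by case: (e a); case: (e b); rewrite /sg /= ?mulN1r ?mulrN1 ?mul1r ?mulr1 ?opprK.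
Qed.

Lemma dgK m (e : 'I_m -> bool) : dg e *m dg e = 1%:M.
Proof.
apply/matrixP => i j; rewrite mul_diag_mx !mxE.
case: (eqVneq i j) => [->|ij]; last by rewrite mulr0.
by case: (e j); rewrite /= ?mulN1r ?opprK ?mulr1.
Qed.

Lemma det_dgAdg m (e : 'I_m -> bool) (A : 'M[C]_m) :
  \det (dg e *m A *m dg e) = \det A.
Proof.
rewrite !det_mulmx mulrC mulrA -det_mulmx dgK det1 mul1r //.
Qed.

Lemma conj_sg b (x : C) : Num.conj (sg b x) = sg b (Num.conj x).
Proof. by case: b; rewrite /sg ?rmorphN. Qed.

Lemma adj_dg m (e : 'I_m -> bool) (A : 'M[C]_m) :
  adjmx (dg e *m A *m dg e) = dg e *m adjmx A *m dg e.
Proof.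
apply/matrixP => a b; rewrite [RHS]dgE /adjmx.
rewrite [LHS]mxE [LHS]mxE dgE conj_sg addbC.
by rewrite [in RHS]mxE [in RHS]mxE.
Qed.

Section G.
Variable n : nat.
Local Notation K := (skew_dim n).

Definition sgs (eps : 'I_n -> bool) (r : 'I_K) : bool :=
  eps (val (enum_val r)).1 (+) eps (val (enum_val r)).2.

Lemma ucoef_S eps (y : pt R K) j k :
  ucoef (Smap (sgs eps) y) j k = sg (eps j (+) eps k) (ucoef y j k).
Proof.
rewrite /ucoef; case: insubP => [u _ Hu|_]; last by rewrite /sg; case: ifP; rewrite ?oppr0.
rewrite /Defs.coord /Smap /= !mxE /sgs enum_rankK Hu /=.
by rewrite -Complex_sg.
Qed.

Lemma Zmat_S eps (y : pt R K) :
  Zmat (Smap (sgs eps) y) = dg eps *m Zmat y *m dg eps.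
Proof.
apply/matrixP => j k; rewrite dgE !mxE !ucoef_S [eps k (+) _]addbC.
by rewrite sgN sgD.
Qed.

Lemma Omega2_norm_S eps (y : pt R K) :
  Omega2_norm (Smap (sgs eps) y) = Omega2_norm y.
Proof.
rewrite /Omega2_norm Zmat_S adj_dg.
have -> : dg eps *m Zmat y *m dg eps *m (dg eps *m adjmx (Zmat y) *m dg eps) =
  dg eps *m (Zmat y *m adjmx (Zmat y)) *m dg eps.
  by rewrite !mulmxA -(mulmxA _ (dg eps) (dg eps)) dgK mulmx1 -!mulmxA.
have -> : (1%:M : 'M[C]_n) - dg eps *m (Zmat y *m adjmx (Zmat y)) *m dg eps =
   dg eps *m (1%:M - Zmat y *m adjmx (Zmat y)) *m dg eps.
  by rewrite mulmxBr mulmxBl mulmx1 dgK.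
by rewrite det_dgAdg.
Qed.

End G.


Section H.
Variable n : nat.
Local Notation p := (n./2).
Local Notation K := (skew_dim n).

Definition eps_of (j0 : 'I_n) (i : 'I_n) := (i == j0) || (i == rev_ord j0).

Definition sfull (j0 : 'I_n) (i : 'I_(K + 1)) : bool :=
  match fintype.split i with
  | inl r => sgs (eps_of j0) r
  | inr _ => false
  end.

Lemma sfull_l j0 r : sfull j0 (lshift 1 r) = sgs (eps_of j0) r.
Proof.
by rewrite /sfull; case: split_ordP => [j' /lshift_inj ->|k /eqP]; rewrite ?eq_shift.
Qed.

Lemma sfull_r j0 k : sfull j0 (rshift K k) = false.
Proof.
by rewrite /sfull; case: split_ordP => [j' /eqP|k' _]; rewrite ?eq_shift.
Qed.

Lemma eps_rev j0 (i : 'I_n) : eps_of j0 (rev_ord i) = eps_of j0 i.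
Proof.
rewrite /eps_of (inj_eq rev_ord_inj) orbC; congr orb.
by rewrite -{1}(rev_ordK j0) (inj_eq rev_ord_inj).
Qed.

Lemma sfull_sigma j0 a : sfull j0 (sigma a) = false.
Proof.
rewrite -(splitK a); case: (fintype.split a) => [j|k] /=.
  rewrite sigma_l sfull_l /sgs enum_rankK /= eps_rev.
  by rewrite addbb.
by rewrite sigma_r sfull_r.
Qed.

Lemma zpart_S j0 (y : pt R (K + 1)) :
  zpart (Smap (sfull j0) y) = Smap (sgs (eps_of j0)) (zpart y).
Proof.
by rewrite /zpart /Smap; congr pair; apply/rowP => r; rewrite !mxE sfull_l.
Qed.

Lemma wpart_S j0 (y : pt R (K + 1)) : wpart (Smap (sfull j0) y) = wpart y.
Proof. by rewrite /wpart /Defs.coord /Smap !mxE sfull_r. Qed.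

Lemma Mpot_S j0 mu : parR (Smap (sfull j0)) false (Mpot (@Omega2_norm R n) mu).
Proof. by move=> z; rewrite /Mpot zpart_S wpart_S Omega2_norm_S. Qed.

Lemma n_le : (n <= p + p + 1)%N.
Proof.
rewrite addnn -{1}(odd_double_half n) addnC leq_add2l.
by case: (odd n).
Qed.

Lemma notimg k : (forall a, k != sigma a) -> exists j0, sfull j0 k = true.
Proof.
move=> Hk; move: Hk; rewrite -(splitK k); case: (fintype.split k) => [r0|k1] /= Hk;
  last first.
  by have := Hk (rshift p ord0); rewrite sigma_r (ord1 k1) eqxx.
set q0 := enum_val r0.
exists (val q0).1; rewrite sfull_l /sgs -/q0 /eps_of eqxx /=.
have lt := valP q0.
apply/negP => /orP [/eqP E|/eqP E].
  by move: lt; rewrite E ltnn.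
have jp : ((val q0).1 < p)%N.
  have := n_le; have := lt; rewrite E /=; lia.
have Eq : q0 = qidx (Ordinal jp).
  apply: val_inj; apply: injective_projections => /=.
    by apply: val_inj.
  by rewrite E; congr rev_ord; apply: val_inj.
have := Hk (lshift 1 (Ordinal jp)).
by rewrite sigma_l -Eq /q0 enum_valK eqxx.
Qed.

End H.

End S.

Local Open Scope complex_scope.
Local Open Scope ring_scope.

Section T.
Variable R : realType.

Lemma fst_cont (A B : normedModType R) : continuous (@fst A B).
Proof. move=> x; exact: cvg_fst. Qed.

Lemma snd_cont (A B : normedModType R) : continuous (@snd A B).
Proof. move=> x; exact: cvg_snd. Qed.

Lemma diff_fst (A B : normedModType R) (x : A * B) : differentiable (@fst A B) x.
Proof.
have fl : linear (@fst A B) by [].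
pose fM := GRing.isLinear.Build _ _ _ _ _ fl.
pose f : {linear (A * B)%type -> A} := HB.pack (@fst A B) fM.
have -> : (@fst A B) = f by [].
apply: linear_differentiable; exact: fst_cont.
Qed.

Lemma diff_snd (A B : normedModType R) (x : A * B) : differentiable (@snd A B) x.
Proof.
have fl : linear (@snd A B) by [].
pose fM := GRing.isLinear.Build _ _ _ _ _ fl.
pose f : {linear (A * B)%type -> B} := HB.pack (@snd A B) fM.
have -> : (@snd A B) = f by [].
apply: linear_differentiable; exact: snd_cont.
Qed.
End T.

Section T2.
Variable R : realType.
Variable n : nat.
Local Notation p := (n./2).
Local Notation K := (skew_dim n).

Lemma G_sum (x : 'rV[R]_(p + 1)) : row_mx (phiv (lsubmx x)) (rsubmx x) =
  \sum_a x 0 a *: (delta_mx 0 (sigma a) : 'rV[R]_(K + 1)).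
Proof.
apply/rowP => i; rewrite phi_entry summxE; apply: eq_bigr => a _.
by rewrite !mxE eqxx /= mulrC.
Qed.

Lemma diff_G (x : 'rV[R]_(p + 1)) :
  differentiable (fun x : 'rV[R]_(p + 1) => row_mx (phiv (lsubmx x)) (rsubmx x)) x.
Proof.
have -> : (fun x : 'rV[R]_(p + 1) => row_mx (phiv (lsubmx x)) (rsubmx x)) =
   \sum_a (fun x : 'rV[R]_(p + 1) => x 0 a *: (delta_mx 0 (sigma a) : 'rV[R]_(K + 1))).
  by apply/funext => y; rewrite G_sum fct_sumE.
apply: differentiable_sum => a.
apply: (@differentiable_comp _ _ _ _ (fun N : 'rV[R]_(p + 1) => N 0 a)
   ( *:%R ^~ (delta_mx 0 (sigma a) : 'rV[R]_(K + 1)))).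
  exact: differentiable_coord.
exact: ex_diff.
Qed.

Lemma diff_phi (z : pt R (p + 1)) : differentiable (@phi_ext R n) z.
Proof.
apply: (@differentiable_pair _ _ _ _
   (fun y : pt R (p + 1) => row_mx (phiv (lsubmx y.1)) (rsubmx y.1))
   (fun y : pt R (p + 1) => row_mx (phiv (lsubmx y.2)) (rsubmx y.2))).
  apply: (@differentiable_comp _ _ _ _ fst
     (fun x : 'rV[R]_(p + 1) => row_mx (phiv (lsubmx x)) (rsubmx x))).
    exact: diff_fst.
  exact: diff_G.
apply: (@differentiable_comp _ _ _ _ snd
   (fun x : 'rV[R]_(p + 1) => row_mx (phiv (lsubmx x)) (rsubmx x))).
  exact: diff_snd.
exact: diff_G.
Qed.

Lemma zpart_phi (z : pt R (p + 1)) :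
  zpart (phi_ext z) = (phiv (lsubmx z.1), phiv (lsubmx z.2)).
Proof. by rewrite /zpart /phi_ext /= !row_mxKl. Qed.

Lemma Complex_sum (I : finType) (a b : I -> R) :
  Complex (\sum_i a i) (\sum_i b i) = \sum_i Complex (a i) (b i).
Proof.
apply: (big_rec3 (fun x y c => Complex x y = c)) => // i x y c _ <-.
by [].
Qed.

Definition U (z : pt R (p + 1)) (m : nat) : complex R :=
  \sum_(j < p) (m == j)%:R * Defs.coord (zpart z) j.

Lemma U_ge (z : pt R (p + 1)) m : (p <= m)%N -> U z m = 0.
Proof.
move=> pm; rewrite /U big1 // => j _.
have -> : (m == j) = false by apply/negbTE; apply/eqP => E; move: (ltn_ord j); lia.
by rewrite mul0r.
Qed.

Lemma U_lt (z : pt R (p + 1)) (j : 'I_p) : U z j = Defs.coord (zpart z) j.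
Proof.
rewrite /U (bigD1 j) //= eqxx mul1r big1 ?addr0 // => i ij.
have -> : (nat_of_ord j == nat_of_ord i) = false by rewrite eq_sym; exact: negbTE ij.
by rewrite mul0r.
Qed.

Lemma ucoef_phi (z : pt R (p + 1)) (j k : 'I_n) :
  ucoef (zpart (phi_ext z)) j k = (k == (n.-1 - j)%N :> nat)%:R * U z j.
Proof.
rewrite /ucoef; case: insubP => [q qlt Hq | nlt].
  rewrite zpart_phi /Defs.coord !mxE /= enum_rankK Hq /= Complex_sum.
  rewrite /U mulr_sumr; apply: eq_bigr => j' _.
  rewrite !mxE /=.
  case: (eqVneq (nat_of_ord j) (nat_of_ord j')) => [E|ne].
    rewrite E /= mul1r.
    case: (k == (n.-1 - j')%N :> nat); rewrite ?mul1r ?mul0r //.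
    by rewrite /Defs.coord /zpart /= !mxE.
  by rewrite /= mul0r mulr0.
case: (ltnP j p) => jp.
  have -> : (k == (n.-1 - j)%N :> nat) = false.
    apply/negbTE; apply/eqP => E; move: nlt; rewrite /= E.
    have := half_le2 n; lia.
  by rewrite mul0r.
by rewrite U_ge // mulr0.
Qed.


Definition e (z : pt R (p + 1)) (m : nat) : complex R := U z m - U z (n.-1 - m)%N.

Lemma Zmat_phi (z : pt R (p + 1)) (j k : 'I_n) :
  Zmat (zpart (phi_ext z)) j k = (k == (n.-1 - j)%N :> nat)%:R * e z j.
Proof.
rewrite mxE !ucoef_phi /e.
have -> : (j == (n.-1 - k)%N :> nat) = (k == (n.-1 - j)%N :> nat).
  by apply/eqP/eqP; have := ltn_ord j; have := ltn_ord k; lia.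
case: eqP => [E|_]; last by rewrite !mul0r subr0.
by rewrite !mul1r E.
Qed.

Lemma rev_val (j : 'I_n) : nat_of_ord (rev_ord j) = (n.-1 - j)%N.
Proof. by rewrite /=; have := ltn_ord j; lia. Qed.

Lemma adjE m (A : 'M[complex R]_m) i j : adjmx A i j = Num.conj (A j i).
Proof. by rewrite /adjmx !mxE. Qed.

Lemma ZZ_phi (z : pt R (p + 1)) (j k : 'I_n) :
  (Zmat (zpart (phi_ext z)) *m adjmx (Zmat (zpart (phi_ext z)))) j k =
  (j == k)%:R * (e z j * Num.conj (e z j)).
Proof.
rewrite mxE (bigD1 (rev_ord j)) //= big1 ?addr0.
  rewrite adjE !Zmat_phi rev_val eqxx mul1r.
  have -> : ((n.-1 - j)%N == (n.-1 - k)%N) = (j == k).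
    rewrite -val_eqE /=; apply/eqP/eqP; have := ltn_ord j; have := ltn_ord k; lia.
  case: (eqVneq j k) => [->|_] /=; first by rewrite mulr1n !mul1r.
  by rewrite mulr0n !mul0r rmorph0 mulr0.
move=> l lj; rewrite adjE !Zmat_phi.
have -> : (nat_of_ord l == (n.-1 - j)%N) = false.
  apply/negbTE; apply: contra lj => /eqP E; apply/eqP/val_inj => /=.
  by rewrite E; have := ltn_ord j; lia.
by rewrite !mul0r.
Qed.

Definition dvec (z : pt R (p + 1)) : 'rV[complex R]_n :=
  \row_j (1 - e z j * Num.conj (e z j)).

Lemma IZZ_diag (z : pt R (p + 1)) :
  1%:M - Zmat (zpart (phi_ext z)) *m adjmx (Zmat (zpart (phi_ext z))) =
  diag_mx (dvec z).
Proof.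
apply/matrixP => j k; rewrite [LHS]mxE [X in _ + X]mxE ZZ_phi !mxE.
by case: (eqVneq j k) => [->|jk] /=; rewrite ?mulr1n ?mulr0n ?mul1r ?mul0r ?subr0 ?oppr0 ?addr0.
Qed.


Lemma mulconj (c : complex R) : c * Num.conj c = (sqn c)%:C.
Proof.
case: c => a b; rewrite /sqn /=; apply/eqP; rewrite eq_complex /=.
by apply/andP; split; apply/eqP; ring.
Qed.

Lemma sqnN (c : complex R) : sqn (- c) = sqn c.
Proof. by case: c => a b; rewrite /sqn /= !sqrrN. Qed.

Lemma sqn0 : sqn (0 : complex R) = 0.
Proof. by rewrite /sqn /= expr0n /= addr0. Qed.

Lemma e_lt (z : pt R (p + 1)) (j : 'I_p) : e z j = Defs.coord (zpart z) j.
Proof.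
rewrite /e U_lt U_ge ?subr0 //.
have := ltn_ord j; have := half_le2 n; lia.
Qed.

Lemma e_rev (z : pt R (p + 1)) (j : 'I_p) : e z (n.-1 - j)%N = - Defs.coord (zpart z) j.
Proof.
have jn := ltn_ord j; have := half_le2 n => h2.
rewrite /e U_ge; last by lia.
have -> : (n.-1 - (n.-1 - j))%N = j by lia.
by rewrite U_lt sub0r.
Qed.

Lemma e_mid (z : pt R (p + 1)) m : (p <= m)%N -> (p <= n.-1 - m)%N -> e z m = 0.
Proof. by move=> h1 h2; rewrite /e !U_ge // subr0. Qed.

Lemma sqn_e (z : pt R (p + 1)) (i : 'I_n) : polydisk (zpart z) -> sqn (e z i) < 1.
Proof.
move=> Hd.
case: (ltnP i p) => ip.
  by have := e_lt z (Ordinal ip); rewrite /= => ->; apply: Hd.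
case: (ltnP (n.-1 - i) p) => ip2.
  have Ei : nat_of_ord i = (n.-1 - (Ordinal ip2))%N by rewrite /=; have := ltn_ord i; lia.
  by rewrite Ei e_rev sqnN; apply: Hd.
by rewrite e_mid // sqn0 ltr01.
Qed.

Lemma dvecE (z : pt R (p + 1)) i : dvec z 0 i = (1 - sqn (e z i))%:C.
Proof. by rewrite mxE mulconj rmorphB rmorph1. Qed.

Lemma posdef_phi (z : pt R (p + 1)) : polydisk (zpart z) -> Omega2 (zpart (phi_ext z)).
Proof.
move=> Hd; rewrite /Omega2 /posdef /= => v v0.
rewrite IZZ_diag mul_mx_diag mxE.
have dpos : forall i, 0 < dvec z 0 i.
  move=> i; rewrite dvecE ltcE /= eqxx /= subr_gt0.
  exact: sqn_e.
have : ~~ [forall j, v 0 j == 0].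
  apply: contra v0 => /forallP H; apply/eqP/rowP => j; rewrite mxE; exact/eqP/H.
rewrite negb_forall => /existsP [j0 Hj0].
have tE : forall j, (\matrix_(i, j) (v i j * dvec z 0 j)) 0 j * (map_mx Num.conj v)^T j 0
   = v 0 j * Num.conj (v 0 j) * dvec z 0 j.
  by move=> j; rewrite [X in X * _]mxE [X in _ * X]mxE [X in _ * X]mxE mulrAC.
rewrite (bigD1 j0) //=; apply: ltr_wpDr.
  apply: sumr_ge0 => j _; rewrite tE.
  by apply: mulr_ge0; [exact: mul_conjC_ge0 | exact: ltW].
rewrite tE; apply: mulr_gt0; last exact: dpos.
by rewrite mul_conjC_gt0.
Qed.


Lemma prod_g (z : pt R (p + 1)) :
  \prod_(i < n) (1 - sqn (e z i)) = polydisk_norm (zpart z) ^+ 2.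
Proof.
have h2 := half_le2 n.
rewrite (bigID (fun i : 'I_n => (i < p)%N)) /=.
rewrite (big_ord_narrow (half_le n)) /=.
under eq_bigr => j _ do rewrite e_lt.
rewrite [X in _ * X](reindex_inj rev_ord_inj) /=.
rewrite [X in _ * X](bigID (fun i : 'I_n => (i < p)%N)) /=.
rewrite [X in _ * (_ * X)]big1 ?mulr1; last first.
  move=> i /andP [h3 h4]; move: h3 h4; rewrite -!leqNgt => h3 h4.
  by rewrite e_mid ?sqn0 ?subr0 //; have := ltn_ord i; lia.
have -> : \prod_(i < n | ~~ (n - i.+1 < p)%N && (i < p)%N) (1 - sqn (e z (n - i.+1)%N)) =
          \prod_(i < n | (i < p)%N) (1 - sqn (e z (n.-1 - i)%N)).
  apply: eq_big => i /=.
    by case: (ltnP i p) => ip; rewrite ?andbF ?andbT //; apply/negP; lia.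
  by move=> _; congr (1 - sqn (e z _)); have := ltn_ord i; lia.
rewrite (big_ord_narrow (half_le n)) /=.
rewrite expr2; congr (_ * _); apply: eq_bigr => j _.
by rewrite (e_rev z j) sqnN.
Qed.

Lemma norm_phi (z : pt R (p + 1)) :
  Omega2_norm (zpart (phi_ext z)) = `|polydisk_norm (zpart z)|.
Proof.
rewrite /Omega2_norm IZZ_diag det_diag.
under eq_bigr => i _ do rewrite dvecE.
by rewrite -rmorph_prod /= prod_g sqrtr_sqr.
Qed.


Lemma near_pos (z : pt R (p + 1)) : polydisk (zpart z) ->
  \forall w \near z, 0 < polydisk_norm (zpart w).
Proof.
move=> Hd.
have H : forall j : 'I_p, \forall w \near z, sqn (Defs.coord (zpart w) j) < 1.
  move=> j; set i := lshift 1 j.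
  have c1 : (fun w : pt R (p + 1) => w.1 0 i) @ z --> z.1 0 i.
    apply: (@cvg_comp _ _ _ fst (fun M : 'rV[R]_(p + 1) => M 0 i)).
      exact: fst_cont.
    exact: coord_continuous.
  have c2 : (fun w : pt R (p + 1) => w.2 0 i) @ z --> z.2 0 i.
    apply: (@cvg_comp _ _ _ snd (fun M : 'rV[R]_(p + 1) => M 0 i)).
      exact: snd_cont.
    exact: coord_continuous.
  have E : (fun w : pt R (p + 1) => sqn (Defs.coord (zpart w) j)) =
     (fun w => w.1 0 i * w.1 0 i + w.2 0 i * w.2 0 i).
    by apply/funext => w; rewrite /sqn /= !mxE !expr2.
  have c : (fun w : pt R (p + 1) => sqn (Defs.coord (zpart w) j)) @ z -->
      sqn (Defs.coord (zpart z) j).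
    rewrite E (_ : sqn _ = z.1 0 i * z.1 0 i + z.2 0 i * z.2 0 i); last first.
      by rewrite /sqn /= !mxE !expr2.
    by apply: cvgD; apply: cvgM.
  have := @cvgr_lt R _ _ _ _ _ c 1 (Hd j).
  by move/(_ (nbhs_filter z)).
have := filter_forall (nbhs_filter z) H.
apply: (@filterS _ _ (nbhs_filter z)) => w Hw; rewrite /polydisk_norm; apply: prodr_gt0 => j _.
by rewrite subr_gt0.
Qed.


Lemma dz_near N (H1 H2 : pt R N -> complex R) a z :
  (\forall w \near z, H1 w = H2 w) -> dz H1 a z = dz H2 a z.
Proof.
move=> H; rewrite /dz /dxC /dyC /dx /dy.
have HR : \forall w \near z, complex.Re (H1 w) = complex.Re (H2 w).
  by apply: (@filterS _ _ (nbhs_filter z)) H => w ->.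
have HI : \forall w \near z, complex.Im (H1 w) = complex.Im (H2 w).
  by apply: (@filterS _ _ (nbhs_filter z)) H => w ->.
by rewrite !(near_eq_derive _ HR) !(near_eq_derive _ HI).
Qed.

Lemma dzb_near N (H1 H2 : pt R N -> complex R) a z :
  (\forall w \near z, H1 w = H2 w) -> dzb H1 a z = dzb H2 a z.
Proof.
move=> H; rewrite /dzb /dxC /dyC /dx /dy.
have HR : \forall w \near z, complex.Re (H1 w) = complex.Re (H2 w).
  by apply: (@filterS _ _ (nbhs_filter z)) H => w ->.
have HI : \forall w \near z, complex.Im (H1 w) = complex.Im (H2 w).
  by apply: (@filterS _ _ (nbhs_filter z)) H => w ->.
by rewrite !(near_eq_derive _ HR) !(near_eq_derive _ HI).
Qed.

Lemma gmet_near N (F G : pt R N -> R) a b z :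
  (\forall w \near z, F w = G w) -> gmet F a b z = gmet G a b z.
Proof.
move=> H; rewrite /gmet; apply: dz_near.
have := nbhs_interior H.
apply: (@filterS _ _ (nbhs_filter z)) => w Hw.
apply: dzb_near.
by apply: (@filterS _ _ (nbhs_filter w)) Hw => v ->.
Qed.


Lemma dx_comp (F : pt R (K + 1) -> R) b w :
  dx (F \o @phi_ext R n) b w = dx F (sigma b) (phi_ext w).
Proof.
rewrite /dx (@D_lin R _ _ (@phi_ext R n) F w (ex R b) (fun h x => phi_lin h (ex R b) x)).
by rewrite phi_ex.
Qed.

Lemma dy_comp (F : pt R (K + 1) -> R) b w :
  dy (F \o @phi_ext R n) b w = dy F (sigma b) (phi_ext w).
Proof.
rewrite /dy (@D_lin R _ _ (@phi_ext R n) F w (ey R b) (fun h x => phi_lin h (ey R b) x)).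
by rewrite phi_ey.
Qed.

Lemma dz_comp (G : pt R (K + 1) -> complex R) b w :
  dz (G \o @phi_ext R n) b w = dz G (sigma b) (phi_ext w).
Proof.
rewrite /dz /dxC /dyC.
rewrite -!(dx_comp (fun y => complex.Re (G y))) -!(dx_comp (fun y => complex.Im (G y))).
by rewrite -!(dy_comp (fun y => complex.Re (G y))) -!(dy_comp (fun y => complex.Im (G y))).
Qed.

Lemma dzb_comp (G : pt R (K + 1) -> complex R) b w :
  dzb (G \o @phi_ext R n) b w = dzb G (sigma b) (phi_ext w).
Proof.
rewrite /dzb /dxC /dyC.
rewrite -!(dx_comp (fun y => complex.Re (G y))) -!(dx_comp (fun y => complex.Im (G y))).
by rewrite -!(dy_comp (fun y => complex.Re (G y))) -!(dy_comp (fun y => complex.Im (G y))).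
Qed.

Lemma gmet_comp (F : pt R (K + 1) -> R) a b z :
  gmet (F \o @phi_ext R n) a b z = gmet F (sigma a) (sigma b) (phi_ext z).
Proof.
rewrite /gmet.
have -> : (fun w => dzb (fun v => Complex ((F \o @phi_ext R n) v) 0) b w) =
   (fun y => dzb (fun v => Complex (F v) 0) (sigma b) y) \o @phi_ext R n.
  apply/funext => w /=.
  exact: (dzb_comp (fun v => Complex (F v) 0)).
exact: (dz_comp (fun y => dzb (fun v => Complex (F v) 0) (sigma b) y)).
Qed.

Lemma wpart_phi (z : pt R (p + 1)) : wpart (phi_ext z) = wpart z.
Proof.
have H : forall x : 'rV[R]_(p + 1),
   \sum_a (rshift K ord0 == sigma a)%:R * x 0 a = x 0 (rshift p ord0).
  move=> x; rewrite (bigD1 (rshift p ord0)) //= sigma_r eqxx mul1r big1 ?addr0 //.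
  move=> a ha; rewrite -(@sigma_r n ord0) (inj_eq (@sigma_inj n)) eq_sym (negbTE ha).
  by rewrite mul0r.
by rewrite /wpart /Defs.coord phi1 phi2 !H.
Qed.

Lemma collapse N (M : 'I_N -> 'I_N -> complex R) i0 j0 :
  \sum_i \sum_j M i j * (i == i0)%:R * (j == j0)%:R = M i0 j0.
Proof.
rewrite (bigD1 i0) //= [X in _ + X]big1 ?addr0.
  rewrite (bigD1 j0) //= [X in _ + X]big1 ?addr0; first by rewrite !eqxx !mulr1.
  by move=> j jj; rewrite (negbTE jj) mulr0.
by move=> i ii; apply: big1 => j _; rewrite (negbTE ii) mulr0 mul0r.
Qed.

End T2.

Local Close Scope complex_scope.
Local Close Scope classical_set_scope.
Local Open Scope ring_scope.

Theorem lemma3p3 (R : realType) (n : nat) (mu : R) :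
  (2 <= n)%N -> 0 < mu ->
  kahler_immersion
    (Mdom (@polydisk R (n./2)) (@polydisk_norm R (n./2)) mu)
    (Mpot (@polydisk_norm R (n./2)) mu)
    (Mdom (@Omega2 R n) (@Omega2_norm R n) mu)
    (Mpot (@Omega2_norm R n) mu)
    (@phi_ext R n)
  /\ totally_geodesic
    (Mdom (@polydisk R (n./2)) (@polydisk_norm R (n./2)) mu)
    (Mpot (@Omega2_norm R n) mu)
    (@phi_ext R n).
Proof.
move=> n2 mu0; split.
  split.
  - move=> z [Hd Hw]; split.
      exact: posdef_phi.
    rewrite wpart_phi norm_phi ger0_norm //.
    rewrite /polydisk_norm; apply: prodr_ge0 => j _; rewrite subr_ge0; exact/ltW/Hd.
  - move=> z _; split; first exact: diff_phi.
    by move=> k b; exact: dzb_f.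
  - move=> z [Hd Hw] a b.
    have E : forall i j, gmet (Mpot (@Omega2_norm R n) mu) i j (phi_ext z) *
        dz (fcomp (@phi_ext R n) i) a z * (dz (fcomp (@phi_ext R n) j) b z)^* =
        gmet (Mpot (@Omega2_norm R n) mu) i j (phi_ext z) *
        (i == sigma a)%:R * (j == sigma b)%:R.
      by move=> i j; rewrite !dz_f conjC_nat.
    rewrite (eq_bigr _ (fun i _ => eq_bigr _ (fun j _ => E i j))) collapse.
    rewrite -gmet_comp; apply: gmet_near.
    apply: (@filterS _ _ (nbhs_filter z)) (near_pos Hd) => w Pw.
    by rewrite /Mpot /= wpart_phi norm_phi gtr0_norm.
move=> z Hz a b.
exists (fun g => christoffel (Mpot (@Omega2_norm R n) mu) (sigma g) (sigma a) (sigma b)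
   (phi_ext z)).
move=> k; rewrite ddz_f add0r.
have E : forall i j, christoffel (Mpot (@Omega2_norm R n) mu) k i j (phi_ext z) *
    dz (fcomp (@phi_ext R n) i) a z * dz (fcomp (@phi_ext R n) j) b z =
    christoffel (Mpot (@Omega2_norm R n) mu) k i j (phi_ext z) *
    (i == sigma a)%:R * (j == sigma b)%:R.
  by move=> i j; rewrite !dz_f.
rewrite (eq_bigr _ (fun i _ => eq_bigr _ (fun j _ => E i j))) collapse.
case: (pselect (exists g, k = sigma g)) => [[g ->]|nk].
  rewrite (bigD1 g) //= [X in _ + X]big1 ?addr0; first by rewrite dz_f eqxx mulr1.
  by move=> g' gg; rewrite dz_f (inj_eq (@sigma_inj n)) eq_sym (negbTE gg) mulr0.
rewrite big1; last first.
  move=> g _; rewrite dz_f.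
  have -> : (k == sigma g) = false by apply/negbTE/eqP => Ek; apply: nk; exists g.
  by rewrite mulr0.
have nk' : forall g, k != sigma g by move=> g; apply/eqP => Ek; apply: nk; exists g.
have [j0 Hj0] := notimg nk'.
apply: (christ0 (s := sfull j0)).
- exact: Mpot_S.
- exact: (phi_fix (sfull_sigma j0)).
- exact: sfull_sigma.
- exact: sfull_sigma.
- exact: Hj0.
Qed.
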